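(* If $\Lambda=T_1\sqcup\cdots\sqcup T_m$ is a partition of $\Lambda$ into pairwise disjoint nonempty tilings $T_1,\dots,T_m$, then $m\le n-2$.
   Context: Fix an integer $n\ge 3$ and write $[n]=\{1,\dots,n\}$. Let $\Lambda$ be the set of 3-element subsets of $[n]$; a triple $\{i,j,k\}$ with $i<j<k$ is written $ijk$. For a 4-element subset $F=\{i<j<k<l\}$ of $[n]$, the stick of $F$ is the sequence $(ijk,\ ijl,\ ikl,\ jkl)$. A tiling (the inversion set of a rhombus tiling of the zonogon $Z(n;2)$) is a subset $T\subseteq\Lambda$ such that for every 4-element $F\subseteq[n]$, $T\cap\mathrm{stick}(F)$ is an initial segment or a final segment of the stick (empty set and whole stick allowed). *)

(* Defs.v *)
From mathcomp Require Import all_boot all_order.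
Set Implicit Arguments. Unset Strict Implicit. Unset Printing Implicit Defensive.

(* Ground set [n] is modelled by 'I_n = {0,...,n-1}, with its natural order. *)

Definition Lambda (n : nat) : {set {set 'I_n}} := [set A : {set 'I_n} | #|A| == 3].

Definition sorted_elems (n : nat) (F : {set 'I_n}) : seq 'I_n :=
  sort (fun a b : 'I_n => (a <= b)%N) (enum F).

(* For F = {i<j<k<l}, stick F = (ijk, ijl, ikl, jkl),
   i.e. (F\{l}, F\{k}, F\{j}, F\{i}). *)
Definition stick (n : nat) (F : {set 'I_n}) : seq {set 'I_n} :=
  [seq F :\ x | x <- rev (sorted_elems F)].

Definition is_initial (s : seq bool) : Prop :=
  exists k, s = nseq k true ++ nseq (size s - k) false.
Definition is_final (s : seq bool) : Prop :=
  exists k, s = nseq k false ++ nseq (size s - k) true.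

Definition tiling (n : nat) (T : {set {set 'I_n}}) : Prop :=
  T \subset Lambda n /\
  forall F : {set 'I_n}, #|F| = 4 ->
    let s := [seq (A \in T) | A <- stick F] in is_initial s \/ is_final s.

(* Main.v *)
Require Import Defs.
From mathcomp Require Import all_boot all_order.
From mathcomp Require Import zify.

Set Implicit Arguments. Unset Strict Implicit.
Section S.
Variable n : nat.
Implicit Types a b c d : 'I_n.

Lemma perm4 a b c d : (a < b)%N -> (b < c)%N -> (c < d)%N ->
  perm_eq (enum [set a; b; c; d]) [:: a; b; c; d].
Proof.
move=> ab bc cd; apply: uniq_perm; first exact: enum_uniq.
  by rewrite /= !inE -!val_eqE /=; lia.
by move=> z; rewrite mem_enum !inE -!orbA.
Qed.

Lemma sorted4 a b c d : (a < b)%N -> (b < c)%N -> (c < d)%N ->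
  sorted_elems [set a; b; c; d] = [:: a; b; c; d].
Proof.
move=> ab bc cd.
have tot : total (fun x y : 'I_n => (x <= y)%N) by move=> x y; apply: leq_total.
have tr : transitive (fun x y : 'I_n => (x <= y)%N) by move=> x y z; apply: leq_trans.
have asy : antisymmetric (fun x y : 'I_n => (x <= y)%N).
  by move=> x y /andP[h1 h2]; apply/val_inj/eqP; rewrite eqn_leq h1 h2.
rewrite /sorted_elems.
have -> : sort (fun x y : 'I_n => (x <= y)%N) (enum [set a; b; c; d]) =
          sort (fun x y : 'I_n => (x <= y)%N) [:: a; b; c; d].
  by apply/(perm_sortP tot tr asy); apply: perm4.
rewrite (sorted_sort tr) //=; apply/and4P; split => //; lia.
Qed.

Lemma stick4 a b c d : (a < b)%N -> (b < c)%N -> (c < d)%N ->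
  stick [set a; b; c; d] = [:: [set a; b; c]; [set a; b; d]; [set a; c; d]; [set b; c; d]].
Proof.
move=> ab bc cd; rewrite /stick sorted4 //=.
by congr [:: _; _; _; _]; apply/setP => z; rewrite !inE -!val_eqE /=; lia.
Qed.

Lemma card4 a b c d : (a < b)%N -> (b < c)%N -> (c < d)%N ->
  #|[set a; b; c; d]| = 4.
Proof.
move=> ab bc cd; by rewrite cardE (perm_size (perm4 ab bc cd)).
Qed.

Lemma seg4 x2 x3 x4 : is_initial [:: false; x2; x3; x4] \/ is_final [:: false; x2; x3; x4] ->
  (x2 ==> x3) && (x3 ==> x4).
Proof.
by case=> [][[|[|[|[|[|k]]]]]]; case: x2; case: x3; case: x4.
Qed.

Lemma rule (T : {set {set 'I_n}}) a b c d : tiling T -> (a < b)%N -> (b < c)%N -> (c < d)%N ->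
  [set a; b; c] \notin T ->
  (([set a; b; d] \in T) ==> ([set a; c; d] \in T)) && (([set a; c; d] \in T) ==> ([set b; c; d] \in T)).
Proof.
move=> [_ tT] ab bc cd nT.
have := tT _ (card4 ab bc cd); rewrite stick4 //= (negbTE nT).
exact: seg4.
Qed.

Lemma core (T : {set {set 'I_n}}) a b c : tiling T -> (a < b)%N -> (b < c)%N ->
  [set a; b; c] \in T ->
  (forall t, t \in T -> ~ (forall x, x \in t -> (x < c)%N)) ->
  exists x y : 'I_n, x.+2 = c /\ y.+1 = c /\ [set x; y; c] \in T.
Proof.
move=> tT ab bc abcT Hmin.
have [a' [b' [ab' [bc' T1]]]] : exists a' b' : 'I_n, (a' < b')%N /\ b'.+1 = c /\ [set a'; b'; c] \in T.
  case: (eqVneq b.+1 c) => [e|ne]; first by exists a, b.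
  have dn : (c.-1 < n)%N by have := ltn_ord c; lia.
  pose d := Ordinal dn.
  have bd : (b < d)%N by rewrite /=; lia.
  have dc : (d < c)%N by rewrite /=; lia.
  have nT : [set a; b; d] \notin T.
    apply/negP => h; apply: (Hmin _ h) => x; rewrite !inE -!val_eqE /=; lia.
  have /andP[h1 h2] := rule tT ab bd dc nT.
  exists b, d; split => //; split; first by rewrite /=; lia.
  by rewrite (implyP h2) // (implyP h1).
case: (eqVneq a'.+2 c) => [e|ne]; first by exists a', b'.
have en : (c - 2 < n)%N by have := ltn_ord c; lia.
pose e := Ordinal en.
have ae : (a' < e)%N by rewrite /=; lia.
have eb : (e < b')%N by rewrite /=; lia.
have nT : [set a'; e; b'] \notin T.
  apply/negP => h; apply: (Hmin _ h) => x; rewrite !inE -!val_eqE /=; lia.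
have b'c : (b' < c)%N by lia.
have /andP[h1 h2] := rule tT ae eb b'c nT.
exists e, b'; split; first by rewrite /=; lia.
by split => //; rewrite (implyP h2).
Qed.

Lemma exists_c (T : {set {set 'I_n}}) : tiling T -> T != set0 ->
  exists c : 'I_n, exists x y : 'I_n, x.+2 = c /\ y.+1 = c /\ [set x; y; c] \in T.
Proof.
move=> tT /set0Pn[t0 t0T].
have sub : forall t, t \in T -> #|t| = 3.
  by move=> t /(subsetP tT.1); rewrite inE => /eqP.
pose P k := [exists t in T, [forall x in t, (x <= k)%N]].
have exP : exists k, P k.
  exists n; apply/existsP; exists t0; rewrite t0T /=; apply/forallP => x.
  by apply/implyP => _; apply: ltnW.
case: (ex_minnP exP) => c0 /existsP[t /andP[tT0 /forallP tall]] cmin.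
have Hmin : forall t', t' \in T -> ~ (forall x, x \in t' -> (x < c0)%N).
  move=> t' t'T hall.
  have : P c0.-1.
    apply/existsP; exists t'; rewrite t'T /=; apply/forallP => x.
    by apply/implyP => /hall; lia.
  move/cmin => hc.
  have : (0 < #|t'|)%N by rewrite sub.
  rewrite card_gt0 => /set0Pn[x /hall]; lia.
have [c cT cv] : exists2 c, c \in t & val c = c0.
  case: (boolP [exists c in t, val c == c0]) => [/existsP[c /andP[h1 /eqP h2]]|h].
    by exists c.
  exfalso; apply: (Hmin t tT0) => x xt.
  have := implyP (tall x) xt.
  move: h => /existsPn /(_ x); rewrite xt /=; lia.
have /cards2P[x [y [nxy exy]]] : #|t :\ c| == 2.
  by have := cardsD1 c t; rewrite cT sub //; lia.
have xt : x \in t :\ c by rewrite exy !inE eqxx.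
have yt : y \in t :\ c by rewrite exy !inE eqxx orbT.
move: xt yt; rewrite !inE => /andP[xc xt] /andP[yc yt].
have := implyP (tall x) xt; have := implyP (tall y) yt.
move: xc yc nxy; rewrite -!val_eqE /= cv => xc yc nxy yle xle.
have tE : t = [set x; y; c].
  rewrite -(setD1K cT) exy; apply/setP => z; rewrite !inE.
  by rewrite orbC -orbA.
have Hmin' : forall t', t' \in T -> ~ (forall x, x \in t' -> (x < c)%N).
  by rewrite cv.
case: (ltngtP x y) => hxy.
- have yc' : (y < c)%N by rewrite cv; lia.
  by exists c; apply: (core tT hxy yc') => //; rewrite -tE.
- have xc' : (x < c)%N by rewrite cv; lia.
  have tE' : t = [set y; x; c].
    by rewrite tE; apply/setP => z; rewrite !inE; case: (z == x); case: (z == y).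
  by exists c; apply: (core tT hxy xc') => //; rewrite -tE'.
- by rewrite hxy eqxx in nxy.
Qed.
End S.

Theorem mainTheorem13 (n m : nat) (T : 'I_m -> {set {set 'I_n}}) :
  (3 <= n)%N ->
  (forall i, tiling (T i)) ->
  (forall i, T i != set0) ->
  (forall i j, i != j -> [disjoint T i & T j]) ->
  \bigcup_(i < m) T i = Lambda n ->
  (m <= n - 2)%N.
Proof.
move=> n3 tT ne dis _.
have := fun i => exists_c (tT i) (ne i).
case/fin_all_exists => f Hf.
have lt : forall i, (f i - 2 < n - 2)%N.
  move=> i; have [x [y [e1 _]]] := Hf i; have := ltn_ord (f i); lia.
pose g i := Ordinal (lt i).
have ginj : injective g.
  move=> i j /(congr1 val) /= e.
  have [x [y [ex [ey hi]]]] := Hf i; have [x' [y' [ex' [ey' hj]]]] := Hf j.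
  have fij : f i = f j by apply: ord_inj; lia.
  have hx : x' = x by apply: ord_inj; lia.
  have hy : y' = y by apply: ord_inj; lia.
  rewrite hx hy -fij in hj.
  case: (eqVneq i j) => // nij.
  by rewrite (disjointFr (dis _ _ nij) hi) in hj.
have := leq_card _ ginj; rewrite !card_ord.
by [].
Qed.
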